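(* Consider the model and the two-stage decision procedure described in the context, and let $W(\gamma_t,p_t)=\sup\{P_{\mathrm e}(\gamma_t,p_t,\mathbf t,P_{\mathrm{FA,M}},P_{\mathrm{MD,M}}):\ \mathbf t\in\{0,1\}^N,\ \sum_i(1-t_i)\le\bar mN,\ P_{\mathrm{FA,M}},P_{\mathrm{MD,M}}\in[0,1]\}$. Let $\Gamma_t=\{p_\alpha(a\mid1)/p_\alpha(a\mid0): a\in\mathcal A\}$. Then the minimal value of $W(\gamma_t,p_t)$ over $\gamma_t>0$, $p_t\in[0,1]$ can be achieved with $\gamma_t\in\Gamma_t$; that is, $\inf_{\gamma_t>0,\,p_t\in[0,1]}W(\gamma_t,p_t)=\inf_{\gamma_t\in\Gamma_t,\,p_t\in[0,1]}W(\gamma_t,p_t)$.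
   Context: There are $N$ robots indexed by $i\in\{1,\dots,N\}$ and $\bar m\in[0,1]$ is a known upper bound on the proportion of malicious robots. A binary event $\Xi\in\{0,1\}$ has prior probabilities $\Pr(\Xi=0),\Pr(\Xi=1)>0$; $\mathcal H_0$ means $\Xi=0$, $\mathcal H_1$ means $\Xi=1$. An unknown deterministic trust vector $\mathbf t\in\{0,1\}^N$ indicates legitimate ($t_i=1$) or malicious ($t_i=0$) robots. Given $\Xi$ and $\mathbf t$, the measurements $Y_i\in\{0,1\}$ are independent with $\Pr(Y_i=1\mid\Xi=0)=P_{\mathrm{FA,L}}$, $\Pr(Y_i=0\mid\Xi=1)=P_{\mathrm{MD,L}}$ if $t_i=1$ and $\Pr(Y_i=1\mid\Xi=0)=P_{\mathrm{FA,M}}$, $\Pr(Y_i=0\mid\Xi=1)=P_{\mathrm{MD,M}}$ if $t_i=0$, where $P_{\mathrm{FA,L}},P_{\mathrm{MD,L}}\in(0,0.5)$ and $P_{\mathrm{FA,M}},P_{\mathrm{MD,M}}\in[0,1]$. Trust values $\alpha_i$ take values in a finite set $\mathcal A$; given $\mathbf t$ they are independent with pmf $p_\alpha(\cdot\mid t_i)$, independent of $\Xi$ and the measurements; $p_\alpha(a\mid0)p_\alpha(a\mid1)\notin\{0,1\}$ for all $a\in\mathcal A$. Two-stage procedure with parameters $\gamma_t>0$, $p_t\in[0,1]$: $\hat t_i=1$ if $p_\alpha(\alpha_i\mid1)/p_\alpha(\alpha_i\mid0)>\gamma_t$, $\hat t_i=0$ if it is $<\gamma_t$, and on equality $\hat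 t_i=1$ with probability $p_t$ (independently), else $0$. With $\gamma_{\mathrm{TS}}=\log(\Pr(\Xi=0)/\Pr(\Xi=1))$, $w_1=\log\frac{1-P_{\mathrm{MD,L}}}{P_{\mathrm{FA,L}}}$, $w_0=\log\frac{1-P_{\mathrm{FA,L}}}{P_{\mathrm{MD,L}}}$, $S_N=\sum_i\hat t_i[w_1Y_i-w_0(1-Y_i)]$, define $P_{\mathrm{FA}}=\Pr(S_N\ge\gamma_{\mathrm{TS}}\mid\mathcal H_0)$, $P_{\mathrm{MD}}=\Pr(S_N<\gamma_{\mathrm{TS}}\mid\mathcal H_1)$ and $P_{\mathrm e}(\gamma_t,p_t,\mathbf t,P_{\mathrm{FA,M}},P_{\mathrm{MD,M}})=\Pr(\Xi=0)P_{\mathrm{FA}}+\Pr(\Xi=1)P_{\mathrm{MD}}$. *)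

(* Defs.v *)
From HB Require Import structures.
From mathcomp Require Import all_boot all_order all_algebra.
From mathcomp Require Import all_classical all_reals all_analysis.
Set Implicit Arguments. Unset Strict Implicit. Unset Printing Implicit Defensive.
Import Order.TTheory GRing.Theory Num.Theory.
Local Open Scope ring_scope.
Local Open Scope classical_set_scope.

Section Model.
Variable R : realType.
Variable N : nat.
Variable A : finType.
(* palpha b a = p_alpha(a | b) *)
Variable palpha : bool -> A -> R.
(* pi0 = Pr(Xi = 0); Pr(Xi = 1) = 1 - pi0 *)
Variable pi0 : R.
Variables PFAL PMDL : R.

Definition b2R (b : bool) : R := if b then 1 else 0.

Definition lratio (a : A) : R := palpha true a / palpha false a.

(* first-stage trust decision, given trust value a and tie-breaking coin u *)
Definition that (gt : R) (a : A) (u : bool) : bool :=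
  if lratio a > gt then true else if lratio a == gt then u else false.

Definition gammaTS : R := ln (pi0 / (1 - pi0)).
Definition w1 : R := ln ((1 - PMDL) / PFAL).
Definition w0 : R := ln ((1 - PFAL) / PMDL).

Definition SN (gt : R) (al : {ffun 'I_N -> A}) (u y : {ffun 'I_N -> bool}) : R :=
  \sum_(i < N) b2R (that gt (al i) (u i)) * (w1 * b2R (y i) - w0 * (1 - b2R (y i))).

(* Pr(Y_i = y | Xi = xi, t_i) *)
Definition pY (PFAM PMDM : R) (xi ti y : bool) : R :=
  let pfa := if ti then PFAL else PFAM in
  let pmd := if ti then PMDL else PMDM in
  if xi then (if y then 1 - pmd else pmd) else (if y then pfa else 1 - pfa).

Definition pU (pt : R) (u : bool) : R := if u then pt else 1 - pt.

(* Pr(E | Xi = xi) for an event E on (alpha, coins, Y), given t *)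
Definition condProb (pt PFAM PMDM : R) (t : {ffun 'I_N -> bool}) (xi : bool)
  (E : {ffun 'I_N -> A} -> {ffun 'I_N -> bool} -> {ffun 'I_N -> bool} -> bool) : R :=
  \sum_(al : {ffun 'I_N -> A}) \sum_(u : {ffun 'I_N -> bool}) \sum_(y : {ffun 'I_N -> bool})
    (\prod_(i < N) palpha (t i) (al i)) * (\prod_(i < N) pU pt (u i)) *
    (\prod_(i < N) pY PFAM PMDM xi (t i) (y i)) * b2R (E al u y).

Definition PFA (gt pt : R) t (PFAM PMDM : R) : R :=
  condProb pt PFAM PMDM t false (fun al u y => SN gt al u y >= gammaTS).
Definition PMD (gt pt : R) t (PFAM PMDM : R) : R :=
  condProb pt PFAM PMDM t true (fun al u y => SN gt al u y < gammaTS).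

Definition Pe (gt pt : R) (t : {ffun 'I_N -> bool}) (PFAM PMDM : R) : R :=
  pi0 * PFA gt pt t PFAM PMDM + (1 - pi0) * PMD gt pt t PFAM PMDM.

Variable mbar : R.

Definition admissible (t : {ffun 'I_N -> bool}) : Prop :=
  (#|[set i | ~~ t i]|)%:R <= mbar * N%:R.

Definition worstPe (gt pt : R) : R :=
  sup [set x | exists t PFAM PMDM, admissible t /\ 0 <= PFAM <= 1 /\
                  0 <= PMDM <= 1 /\ x = Pe gt pt t PFAM PMDM].

Definition GammaT : set R := [set lratio a | a in [set: A]].

End Model.

(* Main.v *)
Require Import Defs.
From HB Require Import structures.
From mathcomp Require Import all_boot all_order all_algebra.
From mathcomp Require Import all_classical all_reals all_analysis.
From mathcomp Require Import ring lra.
Import Order.TTheory GRing.Theory Num.Theory.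
Local Open Scope ring_scope.
Local Open Scope classical_set_scope.

Section Helpers.
Variable R : realType.
Variable N : nat.
Variable A : finType.
Variable palpha : bool -> A -> R.
Variables pi0 PFAL PMDL : R.

Definition SNc (c : A -> bool) (al : {ffun 'I_N -> A}) (y : {ffun 'I_N -> bool}) : R :=
  \sum_(i < N) @b2R R (c (al i)) * (w1 PFAL PMDL * @b2R R (y i) - w0 PFAL PMDL * (1 - @b2R R (y i))).

Lemma condProb_ext (p FM MM : R) t xi E1 E2 :
  (forall (al : {ffun 'I_N -> A}) (u y : {ffun 'I_N -> bool}), \prod_(i < N) pU p (u i) != 0 -> E1 al u y = E2 al u y) ->
  condProb palpha PFAL PMDL p FM MM t xi E1 = condProb palpha PFAL PMDL p FM MM t xi E2.
Proof.
move=> H; apply: eq_bigr => al _; apply: eq_bigr => u _; apply: eq_bigr => y _.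
case: (eqVneq (\prod_(i < N) pU p (u i)) 0) => [->|Hu]; first by rewrite !mulr0 !mul0r.
by rewrite H.
Qed.

Lemma sum_pU (p : R) : \sum_(u : {ffun 'I_N -> bool}) \prod_(i < N) pU p (u i) = 1.
Proof.
rewrite -(bigA_distr_bigA (fun (i : 'I_N) b => pU p b)) /=; apply: big1 => i _.
by rewrite big_bool /= addrC subrK.
Qed.

Lemma condProb_noU (p FM MM : R) t xi (E : {ffun 'I_N -> A} -> {ffun 'I_N -> bool} -> bool) :
  condProb palpha PFAL PMDL p FM MM t xi (fun al u y => E al y) =
  \sum_(al : {ffun 'I_N -> A}) \sum_(y : {ffun 'I_N -> bool})
    (\prod_(i < N) palpha (t i) (al i)) *
    (\prod_(i < N) pY PFAL PMDL FM MM xi (t i) (y i)) * @b2R R (E al y).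
Proof.
apply: eq_bigr => al _.
transitivity (\sum_(u : {ffun 'I_N -> bool}) (\prod_(i < N) pU p (u i)) *
  \sum_(y : {ffun 'I_N -> bool}) ((\prod_(i < N) palpha (t i) (al i)) *
      (\prod_(i < N) pY PFAL PMDL FM MM xi (t i) (y i)) * @b2R R (E al y))).
  apply: eq_bigr => u _; rewrite mulr_sumr; apply: eq_bigr => y _; ring.
by rewrite -mulr_suml sum_pU mul1r.
Qed.

Lemma Pe_red (g p : R) c t (FM MM : R) :
  (forall a u, pU p u != 0 -> that palpha g a u = c a) ->
  Pe palpha pi0 PFAL PMDL g p t FM MM =
  pi0 * (\sum_(al : {ffun 'I_N -> A}) \sum_(y : {ffun 'I_N -> bool})
    (\prod_(i < N) palpha (t i) (al i)) *
    (\prod_(i < N) pY PFAL PMDL FM MM false (t i) (y i)) *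
      @b2R R (gammaTS pi0 <= SNc c al y)) +
  (1 - pi0) * (\sum_(al : {ffun 'I_N -> A}) \sum_(y : {ffun 'I_N -> bool})
    (\prod_(i < N) palpha (t i) (al i)) *
    (\prod_(i < N) pY PFAL PMDL FM MM true (t i) (y i)) *
      @b2R R (SNc c al y < gammaTS pi0)).
Proof.
move=> Hc.
have HS : forall (al : {ffun 'I_N -> A}) (u y : {ffun 'I_N -> bool}), \prod_(i < N) pU p (u i) != 0 ->
    SN palpha PFAL PMDL g al u y = SNc c al y.
  move=> al u y /prodf_neq0 Hu; apply: eq_bigr => i _.
  by rewrite Hc // Hu.
rewrite /Pe /PFA /PMD.
rewrite (condProb_ext _ _ _ _ _ (fun (al : {ffun 'I_N -> A}) (u y : {ffun 'I_N -> bool}) => gammaTS pi0 <= SN palpha PFAL PMDL g al u y) (fun (al : {ffun 'I_N -> A}) (u y : {ffun 'I_N -> bool}) => gammaTS pi0 <= SNc c al y)); last first.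
  by move=> al u y /HS ->.
rewrite (condProb_ext _ _ _ _ _ (fun (al : {ffun 'I_N -> A}) (u y : {ffun 'I_N -> bool}) => SN palpha PFAL PMDL g al u y < gammaTS pi0) (fun al u y => SNc c al y < gammaTS pi0)); last first.
  by move=> al u y /HS ->.
by rewrite !condProb_noU.
Qed.

Variable mbar : R.

Lemma worstPe_eq (g p g' p' : R) c :
  (forall a u, pU p u != 0 -> that palpha g a u = c a) ->
  (forall a u, pU p' u != 0 -> that palpha g' a u = c a) ->
  worstPe N palpha pi0 PFAL PMDL mbar g p = worstPe N palpha pi0 PFAL PMDL mbar g' p'.
Proof.
move=> Hc Hc'.
have HPe : forall (t : {ffun 'I_N -> bool}) (FM MM : R), Pe palpha pi0 PFAL PMDL g p t FM MM =
                           Pe palpha pi0 PFAL PMDL g' p' t FM MM.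
  by move=> t FM MM; rewrite (Pe_red _ _ _ _ _ _ Hc) (Pe_red _ _ _ _ _ _ Hc').
rewrite /worstPe; congr sup; apply/seteqP; split => x [t [FM [MM [H1 [H2 [H3 ->]]]]]];
  exists t, FM, MM; by rewrite HPe.
Qed.

End Helpers.

Theorem lemma3 (R : realType) (N : nat) (A : finType)
  (palpha : bool -> A -> R) (pi0 PFAL PMDL mbar : R)
  (Hmbar : 0 <= mbar <= 1)
  (Hpi0 : 0 < pi0 < 1)
  (HPFAL : 0 < PFAL < 1 / 2) (HPMDL : 0 < PMDL < 1 / 2)
  (Hpa_ge0 : forall b a, 0 <= palpha b a)
  (Hpa_sum : forall b, \sum_(a : A) palpha b a = 1)
  (Hpa_nd : forall a, palpha false a * palpha true a != 0 /\
                      palpha false a * palpha true a != 1) :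
  inf [set W | exists gt pt, 0 < gt /\ 0 <= pt <= 1 /\
          W = worstPe N palpha pi0 PFAL PMDL mbar gt pt]
  = inf [set W | exists gt pt, gt \in GammaT palpha /\ 0 <= pt <= 1 /\
          W = worstPe N palpha pi0 PFAL PMDL mbar gt pt].
Proof.
have Hr : forall a, 0 < lratio palpha a.
  move=> a; have [H _] := Hpa_nd a; move: H; rewrite mulf_eq0 negb_or => /andP [H0 H1].
  by rewrite /lratio divr_gt0 // lt0r ?H0 ?H1 ?Hpa_ge0.
have [a0 _] : {a0 : A | true}.
  case: (pickP (fun _ : A => true)) => [a0 _|H0]; first by exists a0.
  have := Hpa_sum true; rewrite big_pred0 // => /eqP; by rewrite eq_sym oner_eq0.
have Hequiv : forall gt pt, 0 < gt -> 0 <= pt <= 1 -> exists gt' pt',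
    gt' \in GammaT palpha /\ 0 <= pt' <= 1 /\
    worstPe N palpha pi0 PFAL PMDL mbar gt pt = worstPe N palpha pi0 PFAL PMDL mbar gt' pt'.
  move=> gt pt Hgt Hpt.
  case: (boolP (gt \in GammaT palpha)) => HG; first by exists gt, pt.
  have Hne : forall a, (lratio palpha a == gt) = false.
    move=> a; apply/negbTE/negP => /eqP E; move/negP: HG; apply; apply/mem_set.
    by exists a.
  have Hc : forall a u, pU pt u != 0 -> that palpha gt a u = (gt < lratio palpha a).
    by move=> a u _; rewrite /that Hne; case: ifP.
  case: (pickP (fun a => gt < lratio palpha a)) => [a1 Ha1 | Hnone].
    case: (@arg_minP _ _ A a1 (fun a => gt < lratio palpha a) (lratio palpha) Ha1)
      => am Ham Hmin.
    exists (lratio palpha am), 1; split; first by apply/mem_set; exists am.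
    split; first by rewrite ler01 lexx.
    apply: (worstPe_eq _ _ _ _ _ _ _ _ _ _ _ _ _ Hc) => a [] Hu; last first.
      by move: Hu; rewrite /pU subrr eqxx.
    rewrite /that; case: (ltP gt (lratio palpha a)) => Hga.
      have := Hmin a Hga; rewrite le_eqVlt => /orP [/eqP ->|->] //.
      by rewrite ltxx eqxx.
    have Hlt : lratio palpha a < lratio palpha am by apply: le_lt_trans Hga Ham.
    by rewrite ltNge (ltW Hlt) /= lt_eqF.
  case: (@arg_maxP _ _ A a0 xpredT (lratio palpha) isT) => am _ Hmax.
  exists (lratio palpha am), 0; split; first by apply/mem_set; exists am.
  split; first by rewrite lexx ler01.
  apply: (worstPe_eq _ _ _ _ _ _ _ _ _ _ _ _ _ Hc) => a [] Hu.
    by move: Hu; rewrite /pU eqxx.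
  rewrite /that Hnone; case: ifP => // Hlt; last by case: eqP.
  have := Hmax a isT; rewrite /= leNgt Hlt //.
congr inf; apply/seteqP; split => W [gt [pt [H1 [H2 ->]]]].
  have [gt' [pt' [H3 [H4 ->]]]] := Hequiv gt pt H1 H2.
  by exists gt', pt'.
exists gt, pt; split=> //; move/set_mem: H1 => [a _ <-]; exact: Hr.
Qed.
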